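(* Let $G=(V,E)$ be a finite, simple, connected reflective graph and $x\in V$. Assume the subgraph induced on $S_1(x)$ is connected. Then $S_1(x)$ is isometric.
   Context: $d$ is the combinatorial distance, $S_n(x)=\{v:d(v,x)=n\}$. For adjacent $x\sim y$ let $V_x^y=\{v: d(v,x)<d(v,y)\}$, $V^{xy}=\{v:d(v,x)=d(v,y)\}$. A reflection from $x$ to $y$ is a graph automorphism $\phi$ with $\phi\circ\phi=\mathrm{id}$, $\phi(x)=y$, such that the edges between $V_x^y$ and $V_y^x$ are exactly $\{\{x',\phi(x')\}:x'\in V_x^y\}$ and $\phi$ fixes $V^{xy}$ pointwise. A graph is reflective if every edge admits a reflection. A set $W\subseteq V$ is isometric if for all $w,w'\in W$ there is a shortest path in $G$ from $w$ to $w'$ all of whose vertices lie in $W$. *)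

(* Defs.v *)
From mathcomp Require Import all_boot.
Set Implicit Arguments. Unset Strict Implicit. Unset Printing Implicit Defensive.

Definition simple_graph (T : finType) (e : rel T) : Prop :=
  symmetric e /\ irreflexive e.

Section Graph.
Variables (T : finType) (e : rel T).

Definition walkb (n : nat) (x y : T) : bool :=
  [exists p : n.-tuple T, path e x p && (last x p == y)].

(* combinatorial distance: least n with a walk of length n from x to y
   (a shortest walk has length < #|T| when it exists; #|T| if unreachable). *)
Definition gdist (x y : T) : nat :=
  find (fun n => walkb n x y) (iota 0 #|T|).

Definition connected_graph : Prop :=
  forall x y : T, exists p : seq T, path e x p /\ last x p = y.

Definition sphere (n : nat) (x : T) : {set T} := [set v | gdist v x == n].

Definition Vside (x y : T) : {set T} := [set v | gdist v x < gdist v y].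
Definition Vmid (x y : T) : {set T} := [set v | gdist v x == gdist v y].

Definition involutive_automorphism (phi : T -> T) : Prop :=
  (forall v, phi (phi v) = v) /\ (forall u v, e (phi u) (phi v) = e u v).

Definition reflection (phi : T -> T) (x y : T) : Prop :=
  [/\ involutive_automorphism phi,
      phi x = y,
      (forall u, u \in Vside x y -> phi u \in Vside y x /\ e u (phi u)),
      (forall u v, u \in Vside x y -> v \in Vside y x -> e u v -> v = phi u)
    & forall v, v \in Vmid x y -> phi v = v].

Definition reflective : Prop :=
  forall x y : T, e x y -> exists phi : T -> T, reflection phi x y.

Definition induced_connected (W : {set T}) : Prop :=
  forall u v, u \in W -> v \in W ->
    exists p : seq T, [/\ path e u p, last u p = v & all (mem W) p].

Definition isometric (W : {set T}) : Prop :=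
  forall w w', w \in W -> w' \in W ->
    exists p : seq T, [/\ path e w p, last w p = w', size p = gdist w w'
                       & all (mem W) p].
End Graph.

(* Main.v *)
Require Import Defs.
From mathcomp Require Import all_boot.
Set Implicit Arguments. Unset Strict Implicit. Unset Printing Implicit Defensive.

Section Aux.
Variables (T : finType) (e : rel T).
Hypothesis esym : symmetric e.
Hypothesis eirr : irreflexive e.

Lemma card_seq (s : seq T) : uniq s -> size s <= #|T|.
Proof. by move=> Us; rewrite -(card_uniqP Us); apply: max_card. Qed.

Lemma gdist_eq n u v : n < #|T| -> walkb e n u v ->
  (forall m, m < n -> ~~ walkb e m u v) -> gdist e u v = n.
Proof.
move=> nT Hn Hm; rewrite /gdist.
set P := (fun n => walkb e n u v).
case: (ltngtP (find P (iota 0 #|T|)) n) => // H.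
- have hs : has P (iota 0 #|T|).
    by rewrite has_find size_iota (ltn_trans H nT).
  have := nth_find 0 hs.
  rewrite nth_iota ?add0n; last by rewrite (ltn_trans H nT).
  by move=> HP; have := Hm _ H; rewrite /P in HP; rewrite HP.
- have := before_find 0 H.
  by rewrite nth_iota ?add0n // /P Hn.
Qed.

Lemma gdist_walk u v : gdist e u v < #|T| -> walkb e (gdist e u v) u v.
Proof.
rewrite /gdist => H.
have hs : has (fun n => walkb e n u v) (iota 0 #|T|).
  by rewrite has_find size_iota.
have := nth_find 0 hs.
by rewrite nth_iota ?add0n.
Qed.

Lemma walkb0 u v : walkb e 0 u v -> u = v.
Proof. by move/existsP=> [[[|y s] Hs]] //= /eqP. Qed.

Lemma walkb1 u v : walkb e 1 u v = e u v.
Proof.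
apply/existsP/idP.
- by move=> [[[|y [|z s]] Hs]] //= /andP[/andP[H _] /eqP <-].
- by move=> H; exists [tuple v]; rewrite /= eqxx H.
Qed.

Lemma walkb2 u w v : e u w -> e w v -> walkb e 2 u v.
Proof. by move=> H1 H2; apply/existsP; exists [tuple w; v]; rewrite /= H1 H2 eqxx. Qed.

Lemma gdist0 u : gdist e u u = 0.
Proof.
apply: gdist_eq => //.
- by have := card_seq (s := [:: u]) isT.
- by apply/existsP; exists [tuple]; rewrite /= eqxx.
Qed.

Lemma neq_of_e u v : e u v -> u != v.
Proof. by move=> H; apply/eqP => E; move: H; rewrite E eirr. Qed.

Lemma gdist1 u v : e u v -> gdist e u v = 1.
Proof.
move=> H; have nuv := neq_of_e H.
apply: gdist_eq.
- by have := card_seq (s := [:: u; v]); rewrite /= inE nuv; apply.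
- by rewrite walkb1.
- case=> // _; apply/negP => /walkb0 E; by rewrite E eqxx in nuv.
Qed.

Lemma gdist2 u w v : u != v -> ~~ e u v -> e u w -> e w v -> gdist e u v = 2.
Proof.
move=> nuv neuv H1 H2.
have nuw := neq_of_e H1. have nwv := neq_of_e H2.
apply: gdist_eq.
- by have := card_seq (s := [:: u; w; v]); rewrite /= !inE !negb_or nuw nuv nwv; apply.
- exact: (walkb2 H1 H2).
- case=> [|[|]] // _.
  + apply/negP => /walkb0 E; by rewrite E eqxx in nuv.
  + by rewrite walkb1.
Qed.

Variable x : T.
Local Notation S := (sphere e 1 x).

Lemma in_S1 v : (v \in S) = e v x.
Proof.
rewrite inE; apply/eqP/idP.
- move=> H; case: (ltnP 1 #|T|) => hT.
    by have := gdist_walk (u := v) (v := x); rewrite H walkb1; apply.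
  case: (eqVneq v x) => [E|nvx]; first by rewrite E gdist0 in H.
  have := card_seq (s := [:: v; x]); rewrite /= inE nvx => /(_ isT) h.
  by have := leq_trans h hT.
- exact: gdist1.
Qed.

Definition R a b := a = b \/ e a b \/ exists y, [/\ y \in S, e a y & e y b].

Lemma step a u b : reflective e -> a \in S -> u \in S -> b \in S -> e a u -> R u b -> R a b.
Proof.
move=> refl aS uS bS eau [<-|[eub|[y [yS euy eyb]]]].
- by right; left.
- case: (eqVneq a b) => [->|nab]; first by left.
  case eab: (e a b); first by right; left.
  by right; right; exists u; split.
- case: (eqVneq a b) => [-> | nab]; first by left.
  case eab: (e a b); first by right; left.
  case: (eqVneq a y) => [ay|nay]; first by rewrite ay eyb in eab.
  case eay: (e a y); first by right; right; exists y.
  have [phi [[inv aut] phiy _ _ fixm]] := refl y b eyb.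
  rewrite !in_S1 in aS uS bS yS.
  have fx : phi x = x.
    by apply: fixm; rewrite inE !gdist1 // esym.
  have fa : phi a = a.
    apply: fixm; rewrite inE (gdist2 nay _ aS) ?eay // ?(esym x) //.
    by rewrite (gdist2 nab _ aS) ?eab // esym.
  right; right; exists (phi u); split.
  + by rewrite in_S1 -fx aut.
  + by rewrite -{1}fa aut.
  + by rewrite -phiy aut.
Qed.

Lemma claim p a : reflective e -> a \in S -> path e a p -> all (mem S) p -> R a (last a p).
Proof.
move=> refl; elim: p a => [|u p IH] a aS /=.
- by left.
- move=> /andP[eau pp] /andP[uS allp].
  apply: (step refl aS uS _ eau (IH u uS pp allp)).
  have : all (mem S) (u :: p) by rewrite /= uS.
  by move/allP/(_ _ (mem_last u p)).
Qed.

End Aux.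

Theorem lemma2p10 (T : finType) (e : rel T) (x : T) :
  simple_graph e -> connected_graph e -> reflective e ->
  induced_connected e (sphere e 1 x) ->
  isometric e (sphere e 1 x).
Proof.
move=> [esym eirr] _ refl conn w w' wS w'S.
have [p [pp lp allp]] := conn w w' wS w'S.
have := claim esym eirr refl wS pp allp; rewrite lp.
case: (eqVneq w w') => [<- _| nww'].
  by exists [::]; split => //; rewrite gdist0.
case eww: (e w w').
  by exists [:: w']; rewrite /= eww w'S; split => //; rewrite gdist1.
move=> [E|[|[y [yS ewy eyw]]]]; first by rewrite E eqxx in nww'.
  by rewrite eww.
exists [:: y; w']; rewrite /= ewy eyw yS w'S; split => //.
by rewrite (gdist2 eirr nww' _ ewy eyw) ?eww.
Qed.
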